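(* Let $(\mathcal{Z},d)$ be a Polish metric space, $p\in(1,\infty)$, $q=p/(p-1)$, $\alpha>0$, $\mathbb{P}\in\mathcal{P}_p(\mathcal{Z})$. Let $\ell:\mathcal{Z}\to\mathbb{R}$ be Borel and integrable with respect to every $\mathbb{Q}\in\mathfrak{W}^\alpha_p(\mathbb{P})$, and let $G:\mathcal{Z}\to[0,\infty)$ be Borel. Assume that for every $z,z'\in\mathcal{Z}$ there is a constant-speed geodesic $\varrho:[0,1]\to\mathcal{Z}$ with $\varrho(0)=z$, $\varrho(1)=z'$ such that $$|\ell(z')-\ell(z)|\le\Big(\int_0^1G(\varrho(t))\,dt\Big)\,d(z,z')\quad\text{and}\quad G(\varrho(t))\le(1-t)G(z)+tG(z')\ \ \forall t\in[0,1].$$ Let $\mu=\sup_{\mathbb{Q}\in\mathfrak{W}^\alpha_p(\mathbb{P})}\big(\mathbb{E}_{z\sim\mathbb{Q}}[G(z)^q]\big)^{1/q}$. Then for every $\mathbb{Q}\in\mathfrak{W}^\alpha_p(\mathbb{P})$, $$R_{\mathbb{Q}}(\ell)\le R_{\mathbb{P},\alpha,p}(\ell)\le R_{\mathbb{Q}}(\ell)+2\alpha\mu.$$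
   Context: A constant-speed geodesic from $z$ to $z'$ is a map $\varrho:[0,1]\to\mathcal{Z}$ with $\varrho(0)=z$, $\varrho(1)=z'$ and $d(\varrho(s),\varrho(t))=(t-s)\,d(z,z')$ for $0\le s\le t\le1$. $\mathcal{P}_p(\mathcal{Z})$ is the set of Borel probability measures with finite $p$-th moment; $\mathcal{W}_p(\mathbb{P},\mathbb{Q})=\big(\inf_{\gamma\in\Gamma(\mathbb{P},\mathbb{Q})}\int d(z,z')^p\,d\gamma\big)^{1/p}$ over couplings $\gamma$; $\mathfrak{W}^\alpha_p(\mathbb{P})=\{\mathbb{Q}\in\mathcal{P}_p(\mathcal{Z}):\mathcal{W}_p(\mathbb{P},\mathbb{Q})\le\alpha\}$; $R_{\mathbb{Q}}(\ell)=\int\ell\,d\mathbb{Q}$ and $R_{\mathbb{P},\alpha,p}(\ell)=\sup_{\mathbb{Q}\in\mathfrak{W}^\alpha_p(\mathbb{P})}R_{\mathbb{Q}}(\ell)$. *)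

(* Defs.v *)
From HB Require Import structures.
From mathcomp Require Import all_boot all_order all_algebra.
From mathcomp Require Import all_classical all_reals all_analysis.
Import Order.TTheory GRing.Theory Num.Theory.
Local Open Scope classical_set_scope.
Local Open Scope ring_scope.

HB.mixin Record Measurable_isBorel (R : realType) (d : measure_display) Z
  & Metric R Z & Measurable d Z := {
  borel_measurableE : (measurable : set (set Z)) = <<s open >>
}.
#[short(type="borelMetricType")]
HB.structure Definition BorelMetric (R : realType) (d : measure_display) :=
  { Z of Metric R Z & Measurable d Z & Measurable_isBorel R d Z }.

Section defs.
Context {R : realType} {dd : measure_display} {Z : borelMetricType R dd}.
Local Notation dist := (@mdist R Z).

Definition complete_space :=
  forall F : set_system Z, ProperFilter F -> cauchy F -> cvg F.
Definition separable_space := exists D : set Z, countable D /\ dense D.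
Definition polish := complete_space /\ separable_space.

Definition cs_geodesic (z z' : Z) (rho : R -> Z) :=
  [/\ rho 0 = z, rho 1 = z' &
      forall s t, 0 <= s -> s <= t -> t <= 1 ->
        dist (rho s) (rho t) = (t - s) * dist z z'].

Definition finite_moment (p : R) (P : probability Z R) :=
  exists z0 : Z, (\int[P]_z ((dist z0 z) `^ p)%:E < +oo)%E.

Definition coupling (P Q : probability Z R) (g : probability (Z * Z)%type R) :=
  forall A : set Z, measurable A ->
    g (A `*` setT) = P A /\ g (setT `*` A) = Q A.

Definition wasserstein (p : R) (P Q : probability Z R) : \bar R :=
  ((ereal_inf [set (\int[g]_zz ((dist zz.1 zz.2) `^ p)%:E)%E
                 | g in [set g | coupling P Q g]]) `^ p^-1)%E.

Definition wball (p alpha : R) (P : probability Z R) : set (probability Z R) :=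
  [set Q | finite_moment p Q /\ (wasserstein p P Q <= alpha%:E)%E].

Definition risk (Q : probability Z R) (l : Z -> R) : \bar R :=
  (\int[Q]_z (l z)%:E)%E.

Definition worst_risk (p alpha : R) (P : probability Z R) (l : Z -> R) : \bar R :=
  ereal_sup [set risk Q l | Q in wball p alpha P].

End defs.

(* Main.v *)
Require Import Defs.
From HB Require Import structures.
From mathcomp Require Import all_boot all_order all_algebra.
From mathcomp Require Import all_classical all_reals all_analysis.
From mathcomp Require Import measurable_realfun.
From mathcomp Require Import lra ring.
Import Order.TTheory GRing.Theory Num.Theory.
Import numFieldNormedType.Exports.
Local Open Scope classical_set_scope.
Local Open Scope ring_scope.

Section S.
Context {R : realType} {dd : measure_display} {Z : borelMetricType R dd}.
Local Notation dist := (@mdist R Z).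

Lemma open_mball (x : Z) (r : R) : open [set y | dist x y < r].
Proof.
rewrite openE => y /= hy; rewrite /interior; apply/nbhs_ballP.
exists (r - dist x y); first by rewrite /= subr_gt0.
move=> z; rewrite ballEmdist /= => hz.
rewrite (le_lt_trans (metric_triangle x y z))//.
by rewrite -ltrBrDl.
Qed.

Lemma measurable_mball (x : Z) (r : R) : measurable [set y | dist x y < r].
Proof.
rewrite borel_measurableE; apply: sub_sigma_algebra; exact: open_mball.
Qed.

End S.

Section S2.
Context {R : realType} {dd : measure_display} {Z : borelMetricType R dd}.
Local Notation dist := (@mdist R Z).

Lemma enum_dense (z0 : Z) : separable_space (Z := Z) ->
  exists e : nat -> Z, forall x eps, 0 < eps -> exists n, dist x (e n) < eps.
Proof.
move=> [D [cD dD]].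
have [f finj] := countable_injP _ cD.
pose e n := match pselect (exists x, D x /\ f x = n) with
  | left h => proj1_sig (cid h) | right _ => z0 end.
exists e => x eps eps0.
have [a [bxa Da]] : [set y | dist x y < eps] `&` D !=set0.
  apply: dD; last exact: open_mball.
  by exists x => /=; rewrite mdistxx.
exists (f a); rewrite /e; case: pselect => [h|]; last first.
  by move=> abs; exfalso; apply: abs; exists a.
case: (cid h) => b [Db fb] /=.
by have -> : b = a by apply: finj; rewrite ?inE.
Qed.

Lemma measurable_dist (z0 : Z) : separable_space (Z := Z) ->
  measurable_fun [set: Z * Z] (fun zz => dist zz.1 zz.2).
Proof.
move=> /(enum_dense z0) [e he].
apply: (measurability _ (RGenInftyO.measurableE R)) => //.
move=> /= _ [_ [r ->] <-]; rewrite setTI.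
have -> : (fun zz : Z * Z => dist zz.1 zz.2) @^-1` `]-oo, r[ =
  \bigcup_(i : nat * rat) ([set y | dist (e i.1) y < ratr i.2] `*`
                          [set y | dist (e i.1) y < r - ratr i.2]).
  apply/seteqP; split => [[x y]|[x y]].
    rewrite /preimage /= in_itv /= => hxy.
    pose del := (r - dist x y) / 3.
    have del0 : 0 < del by rewrite divr_gt0 // subr_gt0.
    have [n hn] := he x del del0.
    have [s /itvP hs] := @rat_in_itvoo R del (2 * del) ltac:(by rewrite ltr_pMl // ltr1n).
    exists (n, s) => //=; split => /=.
      by rewrite metric_sym (lt_trans hn) ?hs.
    have h1 := metric_triangle (e n) x y.
    have hdel : r - dist x y = 3 * del by rewrite /del mulrC divfK // pnatr_eq0.
    have h2 : ratr s < 2 * del by rewrite hs.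
    rewrite metric_sym in hn.
    lra.
  move=> [[n s] _ /= [h1 h2]].
  rewrite /preimage /= in_itv /=.
  apply: (le_lt_trans (metric_triangle x (e n) y)).
  by rewrite metric_sym -(subrK (ratr s) r) addrC ltrD // addrC.
apply: countable_bigcupT_measurable => //.
move=> i; apply: measurableX; exact: measurable_mball.
Qed.

End S2.


Section B.
Context {R : realType}.
Local Open Scope ereal_scope.

Lemma ge0_le_integral_nm d (T : measurableType d) (mu : {measure set T -> \bar R})
  (D : set T) (f1 f2 : T -> \bar R) :
  (forall x, D x -> 0 <= f1 x) -> (forall x, D x -> f1 x <= f2 x) ->
  \int[mu]_(x in D) f1 x <= \int[mu]_(x in D) f2 x.
Proof.
move=> f10 f12.
have f20 : forall x, D x -> 0 <= f2 x by move=> x Dx; exact: le_trans (f10 x Dx) (f12 x Dx).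
rewrite (ge0_integralE _ f10) (ge0_integralE _ f20).
apply: le_ereal_sup => _ [h hh <-]; exists h => //= x.
apply: le_trans (hh x) _; exact: lee_restrict.
Qed.

Let mu := (@lebesgue_measure R).

Lemma integral_affine01 (a b : R) : (0 <= a)%R -> (0 <= b)%R ->
  \int[mu]_(t in `[0%R, 1%R]) (((1 - t) * a + t * b)%R)%:E = (((a + b) / 2)%R)%:E.
Proof.
move=> a0 b0.
pose h t := ((1 - t) * a + t * b)%R.
have ch : continuous h.
  move=> x; rewrite /h.
  apply: cvgD.
    apply: cvgM; last exact: cvg_cst.
    apply: cvgB; [exact: cvg_cst|exact: cvg_id].
  apply: cvgM; [exact: cvg_id|exact: cvg_cst].
have mh : measurable_fun setT h by exact: continuous_measurable_fun.
have h0 : forall t, (0 <= t)%R -> (t <= 1)%R -> (0 <= h t)%R.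
  move=> t t0 t1.
  by rewrite /h addr_ge0 // mulr_ge0 // subr_ge0.
have hs : \int[mu]_(t in `[0%R, 1%R]) (h t)%:E = \int[mu]_(t in `[0%R, 1%R]) (h (1 - t)%R)%:E.
  rewrite (@integration_by_substitution_onem R h 1).
  - by rewrite /unstable.onem subrr.
  - by rewrite ler01 lexx.
  - exact: continuous_subspaceT.
have hsum : \int[mu]_(t in `[0%R, 1%R]) (h t)%:E + \int[mu]_(t in `[0%R, 1%R]) (h (1 - t)%R)%:E
   = ((a + b)%R)%:E.
  rewrite -ge0_integralD //; last 4 first.
  - by move=> t; rewrite /= in_itv /= => /andP[t0 t1]; rewrite lee_fin h0.
  - by apply/measurable_EFinP; exact: measurable_funTS.
  - move=> t; rewrite /= in_itv /= => /andP[t0 t1]; rewrite lee_fin h0 //.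
      by rewrite subr_ge0.
    by rewrite lerBlDl lerDr.
  - apply/measurable_EFinP; apply: measurable_funTS.
    by apply: measurableT_comp => //; apply: measurable_funB.
  rewrite (eq_integral (fun=> ((a + b)%R)%:E)); last first.
    by move=> t _; rewrite -EFinD /h; congr EFin; ring.
  rewrite integral_cst //= /mu lebesgue_measure_itv /= lte01 -EFinB subr0 mule1 //.
rewrite -hs in hsum.
have fin : \int[mu]_(t in `[0%R, 1%R]) (h t)%:E \is a fin_num.
  rewrite ge0_fin_numE; last first.
    by apply: integral_ge0 => t; rewrite /= in_itv /= => /andP[t0 t1]; rewrite lee_fin h0.
  have : \int[mu]_(t in `[0%R, 1%R]) (h t)%:E <= ((a + b)%R)%:E.
    rewrite -hsum leeDl // integral_ge0 // => t; rewrite /= in_itv /= => /andP[t0 t1].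
    by rewrite lee_fin h0 // ?subr_ge0 ?lerBlDl ?lerDr.
  by move=> /le_lt_trans; apply; rewrite ltey.
rewrite -(fineK fin) in hsum *; rewrite -EFinD in hsum.
congr EFin; move: hsum => /(congr1 fine) /= <-.
by field.
Qed.

End B.


Section C.
Context {R : realType} {dd : measure_display} {Z : borelMetricType R dd}.
Local Notation dist := (@mdist R Z).

Lemma pointwise (l G : Z -> R) (G0 : forall z, 0 <= G z) :
  (forall z z' : Z, exists rho : R -> Z,
     [/\ cs_geodesic z z' rho,
         ((`|l z' - l z|)%:E <=
            (\int[lebesgue_measure]_(t in `[0%R, 1%R]) (G (rho t))%:E)
            * (mdist z z')%:E)%E
       & forall t, 0 <= t -> t <= 1 ->
           G (rho t) <= (1 - t) * G z + t * G z']) ->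
  forall z z', `|l z' - l z| <= (G z + G z') / 2 * dist z z'.
Proof.
move=> hg z z'; have [rho [_ h1 h2]] := hg z z'.
rewrite -lee_fin; apply: (le_trans h1); rewrite EFinM.
apply: lee_wpmul2r; first by rewrite lee_fin mdist_ge0.
rewrite -integral_affine01 //.
apply: ge0_le_integral_nm.
  by move=> t _; rewrite lee_fin.
by move=> t; rewrite /= in_itv /= => /andP[t0 t1]; rewrite lee_fin h2.
Qed.

Local Open Scope ereal_scope.

Section push.
Variables (A : probability Z R) (g : probability (Z * Z)%type R).
Variables (phi : Z * Z -> Z) (mphi : measurable_fun setT phi).
Hypothesis hA : forall S, measurable S -> g (phi @^-1` S) = A S.

Lemma push_ge0 (f : Z -> \bar R) : measurable_fun setT f -> (forall z, 0 <= f z) ->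
  \int[g]_zz f (phi zz) = \int[A]_z f z.
Proof.
move=> mf f0.
have := @ge0_integral_pushforward _ _ _ _ R phi mphi g setT f measurableT mf (fun y _ => f0 y).
rewrite preimage_setT => <-.
apply: eq_measure_integral => S mS _; exact: hA.
Qed.

Lemma push_int (f : Z -> R) : measurable_fun setT f ->
  A.-integrable setT (EFin \o f) ->
  g.-integrable setT (fun zz => (f (phi zz))%:E) /\
  \int[g]_zz (f (phi zz))%:E = \int[A]_z (f z)%:E.
Proof.
move=> mf /integrableP [mfA ifA].
have ig : g.-integrable setT (fun zz => (f (phi zz))%:E).
  apply/integrableP; split.
    by apply/measurable_EFinP; exact: measurableT_comp.
  rewrite (push_ge0 (fun z => `|(f z)%:E|)) //.
  by apply: measurableT_comp => //; exact/measurable_EFinP.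
split => //.
have := @integral_pushforward _ _ _ _ R phi mphi g setT (EFin \o f)
  ltac:(exact/measurable_EFinP) ltac:(by rewrite preimage_setT) measurableT.
rewrite preimage_setT => <-.
apply: eq_measure_integral => S mS _; exact: hA.
Qed.

End push.

Lemma coupling_fst (A B : probability Z R) g : coupling A B g ->
  forall S, measurable S -> g (fst @^-1` S) = A S.
Proof.
move=> hc S mS; rewrite -(hc S mS).1; congr (g _).
by apply/seteqP; split => [[x y]|[x y]] //= [].
Qed.

Lemma coupling_snd (A B : probability Z R) g : coupling A B g ->
  forall S, measurable S -> g (snd @^-1` S) = B S.
Proof.
move=> hc S mS; rewrite -(hc S mS).2; congr (g _).
by apply/seteqP; split => [[x y]|[x y]] //= [].
Qed.

End C.


Section D.
Context {R : realType} {dd : measure_display} {Z : borelMetricType R dd}.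
Local Notation dist := (@mdist R Z).
Local Open Scope ereal_scope.

Lemma holder_part (A B : probability Z R) (g : probability (Z * Z)%type R)
  (phi : Z * Z -> Z) (mphi : measurable_fun setT phi)
  (hA : forall S, measurable S -> g (phi @^-1` S) = A S)
  (p q m : R) (G : Z -> R) :
  measurable_fun setT (fun zz : Z * Z => dist zz.1 zz.2) ->
  (0 < p)%R -> (0 < q)%R -> (p^-1 + q^-1 = 1)%R ->
  measurable_fun setT G -> (forall z, 0 <= G z)%R ->
  (\int[A]_z ((G z) `^ q)%:E) `^ q^-1 <= m%:E ->
  \int[g]_zz (G (phi zz) * dist zz.1 zz.2)%:E <=
    m%:E * (\int[g]_zz ((dist zz.1 zz.2) `^ p)%:E) `^ p^-1.
Proof.
move=> md p0 q0 pq mG G0 hm.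
have mGp : measurable_fun setT (G \o phi) by exact: measurableT_comp.
have := @hoelder _ _ R g (G \o phi) (fun zz => dist zz.1 zz.2) q p mGp md q0 p0
  ltac:(by rewrite addrC).
rewrite Lnorm1.
have e1 : \int[g]_x `|(EFin \o ((G \o phi) \* (fun zz : Z * Z => dist zz.1 zz.2))%R) x| =
  \int[g]_zz (G (phi zz) * dist zz.1 zz.2)%:E.
  by apply: eq_integral => x _ /=; rewrite ger0_norm // mulr_ge0 // mdist_ge0.
rewrite e1 => /le_trans; apply.
rewrite Lnorm.unlock.
have e2 : \int[g]_x `|(EFin \o (G \o phi)) x| `^ q = \int[g]_zz ((G (phi zz)) `^ q)%:E.
  by apply: eq_integral => x _ /=; rewrite ger0_norm.
have e3 : \int[g]_x `|(EFin \o (fun zz : Z * Z => dist zz.1 zz.2)) x| `^ p =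
    \int[g]_zz ((dist zz.1 zz.2) `^ p)%:E.
  by apply: eq_integral => x _ /=; rewrite ger0_norm // mdist_ge0.
rewrite e2 e3.
rewrite (@push_ge0 _ _ _ A g phi mphi hA (fun z => ((G z) `^ q)%:E)); last 2 first.
- by apply/measurable_EFinP; apply: (@measurableT_comp _ _ _ _ _ _ (@powR R ^~ q)).
- by move=> z; rewrite lee_fin powR_ge0.
apply: lee_wpmul2r => //; exact: poweR_ge0.
Qed.

Lemma key (A B : probability Z R) g (p q m : R) (l G : Z -> R) :
  measurable_fun setT (fun zz : Z * Z => dist zz.1 zz.2) ->
  (0 < p)%R -> (0 < q)%R -> (p^-1 + q^-1 = 1)%R ->
  measurable_fun setT l -> A.-integrable setT (fun z => (l z)%:E) ->
  B.-integrable setT (fun z => (l z)%:E) ->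
  measurable_fun setT G -> (forall z, 0 <= G z)%R ->
  (forall z z', `|l z' - l z| <= (G z + G z') / 2 * dist z z')%R ->
  (\int[A]_z ((G z) `^ q)%:E) `^ q^-1 <= m%:E ->
  (\int[B]_z ((G z) `^ q)%:E) `^ q^-1 <= m%:E ->
  coupling A B g ->
  `|risk B l - risk A l| <= m%:E * (\int[g]_zz ((dist zz.1 zz.2) `^ p)%:E) `^ p^-1.
Proof.
move=> md p0 q0 pq ml iA iB mG G0 hpt hmA hmB hc.
have [i1 e1] := @push_int _ _ _ A g fst measurable_fst (@coupling_fst _ _ _ A B g hc) l ml iA.
have [i2 e2] := @push_int _ _ _ B g snd measurable_snd (@coupling_snd _ _ _ A B g hc) l ml iB.
rewrite /risk -e1 -e2 -integralB_EFin //.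
have ml1 : measurable_fun setT (fun zz : Z * Z => l zz.1) by exact: measurableT_comp.
have ml2 : measurable_fun setT (fun zz : Z * Z => l zz.2) by exact: measurableT_comp.
have mG1 : measurable_fun setT (fun zz : Z * Z => G zz.1) by exact: measurableT_comp.
have mG2 : measurable_fun setT (fun zz : Z * Z => G zz.2) by exact: measurableT_comp.
under eq_integral do rewrite -EFinB.
apply: le_trans (le_abse_integral _ _ _) _ => //.
  by apply/measurable_EFinP; exact: measurable_funB.
apply: (@le_trans _ _ (\int[g]_zz ((G zz.1 * dist zz.1 zz.2 + G zz.2 * dist zz.1 zz.2) * 2^-1)%:E)).
  apply: ge0_le_integral_nm => zz _; first exact: abse_ge0.
  rewrite abse_EFin lee_fin.
  rewrite [X in (_ <= X)%R](_ : _ = (G zz.1 + G zz.2) / 2 * dist zz.1 zz.2)%R; first exact: hpt.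
  by ring.
under eq_integral do rewrite EFinM.
rewrite ge0_integralZr //; last 2 first.
- by apply/measurable_EFinP; apply: measurable_funD; apply: measurable_funM.
- by move=> zz _; rewrite lee_fin addr_ge0 // mulr_ge0 // mdist_ge0.
under eq_integral do rewrite EFinD.
rewrite ge0_integralD //; last 4 first.
- by move=> zz _; rewrite lee_fin mulr_ge0 // mdist_ge0.
- by apply/measurable_EFinP; apply: measurable_funM.
- by move=> zz _; rewrite lee_fin mulr_ge0 // mdist_ge0.
- by apply/measurable_EFinP; apply: measurable_funM.
have h1 := @holder_part A B g fst measurable_fst (@coupling_fst _ _ _ A B g hc) p q m G md p0 q0 pq mG G0 hmA.
have h2 := @holder_part B A g snd measurable_snd (@coupling_snd _ _ _ A B g hc) p q m G md p0 q0 pq mG G0 hmB.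
apply: le_trans (lee_wpmul2r _ (leeD h1 h2)) _; first by rewrite lee_fin invr_ge0.
have X0 : 0 <= m%:E * (\int[g]_zz ((dist zz.1 zz.2) `^ p)%:E) `^ p^-1.
  apply: mule_ge0; last exact: poweR_ge0.
  by apply: le_trans hmA; exact: poweR_ge0.
move: (m%:E * _) X0 => X.
case: X => [x| |//] X0.
  by rewrite -EFinD -EFinM lee_fin; lra.
by rewrite leey.
Qed.

End D.


Section E.
Context {R : realType} {dd : measure_display} {Z : borelMetricType R dd}.
Local Notation dist := (@mdist R Z).
Local Open Scope ereal_scope.

Lemma W_step (A B : probability Z R) (p m alpha x : R) :
  (0 < p)%R -> (0 <= m)%R -> (0 <= x)%R ->
  (forall g, coupling A B g ->
     x%:E <= m%:E * (\int[g]_zz ((dist zz.1 zz.2) `^ p)%:E) `^ p^-1) ->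
  wasserstein p A B <= alpha%:E -> x%:E <= (m * alpha)%:E.
Proof.
move=> p0 m0 x0 hg hW.
have pi0 : (p^-1 != 0)%R by rewrite invr_neq0 // gt_eqF.
have [g0 hg0] : exists g, coupling A B g.
  apply/not_existsP => hn; move: hW; rewrite /wasserstein.
  set S := (X in ereal_inf X).
  have -> : S = set0.
    by apply/seteqP; split => // _ [g /= hg1 _]; apply: (hn g).
  by rewrite ereal_inf0 poweRyr.
have [m00|mpos] := eqVneq m 0%R.
  rewrite m00 in hg *; rewrite mul0r; apply: le_trans (hg g0 hg0) _.
  by rewrite mul0e.
have mp : (0 < m)%R by rewrite lt0r mpos.
have key : forall g, coupling A B g ->
    (((x / m) `^ p)%R)%:E <= \int[g]_zz ((dist zz.1 zz.2) `^ p)%:E.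
  move=> g hc; have := hg g hc.
  have : 0 <= \int[g]_zz ((dist zz.1 zz.2) `^ p)%:E.
    by apply: integral_ge0 => zz _; rewrite lee_fin powR_ge0.
  case: (\int[g]_zz _) => [y| |//] y0; last by rewrite leey.
  rewrite poweR_EFin -EFinM !lee_fin => hxy.
  have y0' : (0 <= y)%R by rewrite -lee_fin.
  have h1 : (x / m <= y `^ p^-1)%R by rewrite ler_pdivrMr // mulrC.
  have h2 : ((x / m) `^ p <= (y `^ p^-1) `^ p)%R.
    apply: ge0_ler_powR => //; first exact: ltW.
      by rewrite nnegrE divr_ge0 // ltW.
    by rewrite nnegrE powR_ge0.
  by rewrite -powRrM mulVf ?gt_eqF // powRr1 // in h2.
have hinf : (((x / m) `^ p)%R)%:E <=
    ereal_inf [set (\int[g]_zz ((dist zz.1 zz.2) `^ p)%:E)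
                 | g in [set g | coupling A B g]].
  by apply: le_ereal_inf_tmp => _ [g hc <-]; exact: key.
have hle : (((x / m) `^ p)%R)%:E `^ p^-1 <=
    (ereal_inf [set (\int[g]_zz ((dist zz.1 zz.2) `^ p)%:E)
                 | g in [set g | coupling A B g]]) `^ p^-1.
  apply: gt0_ler_poweR => //; first by rewrite invr_ge0 ltW.
    by rewrite in_itv /= leey andbT lee_fin powR_ge0.
  rewrite in_itv /= leey andbT; apply: le_ereal_inf_tmp => _ [g _ <-].
  by apply: integral_ge0 => zz _; rewrite lee_fin powR_ge0.
rewrite poweR_EFin -powRrM mulfV ?gt_eqF // powRr1 in hle; last by rewrite divr_ge0 // ltW.
have := le_trans hle hW; rewrite lee_fin ler_pdivrMr // => h.
by rewrite lee_fin mulrC.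
Qed.


End E.


Section F.
Context {R : realType} {dd : measure_display} {Z : borelMetricType R dd}.
Local Notation dist := (@mdist R Z).

Lemma measurable_diag : measurable_fun [set: Z] (fun z : Z => (z, z)).
Proof. by apply: measurable_fun_pair. Qed.

Definition diag_mfun : {mfun Z >-> (Z * Z)%type} :=
  HB.pack (fun z : Z => (z, z)) (isMeasurableFun.Build _ _ _ _ _ measurable_diag).

Local Open Scope ereal_scope.

Lemma P_in_ball (p alpha : R) (P : probability Z R) :
  measurable_fun setT (fun zz : Z * Z => dist zz.1 zz.2) ->
  (0 < p)%R -> (0 <= alpha)%R -> finite_moment p P -> wball p alpha P P.
Proof.
move=> md p0 a0 hP; split => //.
pose g := distribution P diag_mfun.
have hc : coupling P P g.
  move=> S mS; rewrite /g /distribution /pushforward; split; congr (P _);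
  by apply/seteqP; split => [z|z] /=; [case|].
have c0 : \int[g]_zz ((dist zz.1 zz.2) `^ p)%:E = 0.
  rewrite (@ge0_integral_distribution _ _ _ _ R P diag_mfun (fun zz => ((dist zz.1 zz.2) `^ p)%:E)).
  - by apply: integral0_eq => z _ /=; rewrite mdistxx powR0 // gt_eqF.
  - apply/measurable_EFinP; exact: (@measurableT_comp _ _ _ _ _ _ (@powR R ^~ p)).
  - by move=> zz; rewrite lee_fin powR_ge0.
rewrite /wasserstein.
have -> : ereal_inf [set (\int[g0]_zz ((dist zz.1 zz.2) `^ p)%:E)
                 | g0 in [set g0 | coupling P P g0]] = 0.
  apply/eqP; rewrite eq_le; apply/andP; split.
    by rewrite -c0; apply: ereal_inf_lbound; exists g.
  apply: le_ereal_inf_tmp => _ [g1 _ <-].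
  by apply: integral_ge0 => zz _; rewrite lee_fin powR_ge0.
by rewrite poweR0r ?invr_neq0 ?gt_eqF // lee_fin.
Qed.

End F.


Lemma leg (R : realType) (dd : measure_display) (Z : borelMetricType R dd)
  (A B : probability Z R) (p q m alpha : R) (l G : Z -> R) :
  measurable_fun setT (fun zz : Z * Z => mdist zz.1 zz.2) ->
  (0 < p)%R -> (0 < q)%R -> (p^-1 + q^-1 = 1)%R -> (0 <= m)%R ->
  measurable_fun setT l -> A.-integrable setT (fun z => (l z)%:E) ->
  B.-integrable setT (fun z => (l z)%:E) ->
  measurable_fun setT G -> (forall z, 0 <= G z)%R ->
  (forall z z', `|l z' - l z| <= (G z + G z') / 2 * mdist z z')%R ->
  ((\int[A]_z ((G z) `^ q)%:E) `^ q^-1 <= m%:E)%E ->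
  ((\int[B]_z ((G z) `^ q)%:E) `^ q^-1 <= m%:E)%E ->
  (wasserstein p A B <= alpha%:E)%E ->
  `|fine (risk B l) - fine (risk A l)| <= m * alpha.
Proof.
move=> md p0 q0 pq m0 ml iA iB mG G0 hpt hA hB hW.
have fA : risk A l \is a fin_num by exact: integrable_fin_num.
have fB : risk B l \is a fin_num by exact: integrable_fin_num.
rewrite -lee_fin.
apply: (@W_step R dd Z A B p m alpha _ p0 m0 (normr_ge0 _) _ hW) => g hc.
have := @key R dd Z A B g p q m l G md p0 q0 pq ml iA iB mG G0 hpt hA hB hc.
by rewrite -(fineK fA) -(fineK fB) -EFinB abse_EFin.
Qed.

Theorem mainTheorem5 (R : realType) (dd : measure_display)
  (Z : borelMetricType R dd) (p q alpha : R) (P : probability Z R)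
  (l G : Z -> R) :
  polish (Z := Z) ->
  1 < p -> q = p / (p - 1) -> 0 < alpha ->
  finite_moment p P ->
  measurable_fun setT l ->
  (forall Q, wball p alpha P Q -> Q.-integrable setT (fun z => (l z)%:E)) ->
  measurable_fun setT G -> (forall z, 0 <= G z) ->
  (forall z z' : Z, exists rho : R -> Z,
     [/\ cs_geodesic z z' rho,
         ((`|l z' - l z|)%:E <=
            (\int[lebesgue_measure]_(t in `[0%R, 1%R]) (G (rho t))%:E)
            * (mdist z z')%:E)%E
       & forall t, 0 <= t -> t <= 1 ->
           G (rho t) <= (1 - t) * G z + t * G z']) ->
  let mu := ereal_sup [set ((\int[Q]_z ((G z) `^ q)%:E) `^ q^-1)%E
                       | Q in wball p alpha P] in
  forall Q, wball p alpha P Q ->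
    (risk Q l <= worst_risk p alpha P l)%E /\
    (worst_risk p alpha P l <= risk Q l + (2 * alpha)%:E * mu)%E.
Proof.
move=> [_ sep] p1 hq a0 hP ml il mG G0 hg mu Q hQ.
split; first by apply: ereal_sup_ubound; exists Q.
have p0 : 0 < p by lra.
have q0 : 0 < q by rewrite hq divr_gt0 // subr_gt0.
have pq : p^-1 + q^-1 = 1.
  rewrite hq invf_div; field.
  by rewrite gt_eqF.
have [z0 _] := hP.
have md := measurable_dist z0 sep.
have hpt := @pointwise R dd Z l G G0 hg.
have PB := @P_in_ball R dd Z p alpha P md p0 (ltW a0) hP.
have fQ : risk Q l \is a fin_num by exact/integrable_fin_num/il.
have mu0 : (0 <= mu)%E.
  apply: (@le_trans _ _ ((\int[P]_z ((G z) `^ q)%:E) `^ q^-1)%E).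
    exact: poweR_ge0.
  by apply: ereal_sup_ubound; exists P.
have [muy|muy] := eqVneq mu +oo%E.
  rewrite muy gt0_muley ?lte_fin ?mulr_gt0 //.
  by rewrite -(fineK fQ) addey // leey.
have fmu : mu \is a fin_num by rewrite ge0_fin_numE // ltey.
set m := fine mu.
have m0 : 0 <= m by rewrite fine_ge0.
have hm : forall Q', wball p alpha P Q' ->
    ((\int[Q']_z ((G z) `^ q)%:E) `^ q^-1 <= m%:E)%E.
  by move=> Q' hQ'; rewrite /m fineK //; apply: ereal_sup_ubound; exists Q'.
have h1 := @leg R dd Z P Q p q m alpha l G md p0 q0 pq m0 ml (il _ PB) (il _ hQ) mG G0 hpt (hm _ PB) (hm _ hQ) hQ.2.
apply: ge_ereal_sup => _ [Q' hQ' <-].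
have fQ' : risk Q' l \is a fin_num by exact/integrable_fin_num/il.
have h2 := @leg R dd Z P Q' p q m alpha l G md p0 q0 pq m0 ml (il _ PB) (il _ hQ') mG G0 hpt (hm _ PB) (hm _ hQ') hQ'.2.
rewrite -(fineK fmu) -/m -(fineK fQ) -(fineK fQ') -EFinM -EFinD lee_fin.
move: h1 h2; rewrite !ler_norml; lra.
Qed.
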